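(* Let $R$ be a ring and let $\mathcal{L}$ and $\mathcal{G}$ be two classes of left $R$-modules such that $\mathcal{L}$ is closed under extensions and $0 \in \mathcal{L} \cap \mathcal{G}$. Then the following conditions are equivalent. (1) $\underline{\mathfrak{Pr}}^{-1}_{R\text{-Mod}}(\mathcal{L})=\mathcal{G}$, and $\mathrm{Hom}_{\mathscr{K}(R)}(M,N)=0$ for every $N \in \#\mathcal{G}$ and every $M \in \widetilde{\mathcal{L}}$. (2) $\underline{\mathfrak{Pr}}^{-1}_{\mathscr{C}(R)}(\widetilde{\mathcal{L}})=\#\mathcal{G}$.
   Context: $R$ is an associative ring with unit; modules are left $R$-modules; $R\text{-Mod}$ is the category of left $R$-modules, $\mathscr{C}(R)$ the category of (homologically indexed) complexes of modules, and $\mathscr{K}(R)$ the homotopy category, so $\mathrm{Hom}_{\mathscr{K}(R)}(M,N)$ is the group of homotopy classes of morphisms of complexes $M\to N$. For objects $M,N$ of an abelian category $\mathscr{A}$ with enough projectives ($\mathscr{A}=R\text{-Mod}$ or $\mathscr{C}(R)$), $M$ is $N$-subprojective if every morphism $M\to N$ factors through a projective object of $\mathscr{A}$. The subprojectivity domain $\underline{\mathfrak{Pr}}^{-1}_{\mathscr{A}}(M)$ is the class of all $N$ such that $M$ is $N$-subprojective; for a class $\mathfrak{C}$ of objects, $\underline{\mathfrak{Pr}}^{-1}_{\mathscr{A}}(\mathfrak{C})$ is the class of all $N$ such that every $C\in\mathfrak{C}$ is $N$-subprojective. For a class of modules $\mathcal{L}$: $\#\mathcal{L}$ is the class of complexes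 $X$ with every $X_n\in\mathcal{L}$; $\widetilde{\mathcal{L}}$ is the class of exact complexes $X$ with every cycle module $Z_n(X)=\mathrm{Ker}\,d_n^X\in\mathcal{L}$. *)

(* Defs.v *)
From HB Require Import structures.
From mathcomp Require Import all_boot all_order all_algebra.
Set Implicit Arguments. Unset Strict Implicit. Unset Printing Implicit Defensive.
Import GRing.Theory.
Local Open Scope ring_scope.

Definition kerpred (R : pzRingType) (M N : lmodType R) (f : {linear M -> N}) :
  pred M := fun x => f x == 0.

Lemma kerpred_submod (R : pzRingType) (M N : lmodType R) (f : {linear M -> N}) :
  submod_closed (kerpred f).
Proof.
split; first by rewrite unfold_in /kerpred /= linear0.
move=> a u v; rewrite !unfold_in /kerpred /= => /eqP fu /eqP fv.
by rewrite linearP fu fv scaler0 addr0.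
Qed.

HB.instance Definition _ (R : pzRingType) (M N : lmodType R) (f : {linear M -> N}) :=
  GRing.isSubmodClosed.Build R M (kerpred f) (kerpred_submod f).

Record kertype (R : pzRingType) (M N : lmodType R) (f : {linear M -> N}) :=
  KerElt { kerval : M; _ : kerval \in kerpred f }.

HB.instance Definition _ R M N f := [isSub for @kerval R M N f].
HB.instance Definition _ R M N f := [Choice of @kertype R M N f by <:].
HB.instance Definition _ R M N f := [SubChoice_isSubLmodule of @kertype R M N f by <:].

Definition Ker (R : pzRingType) (M N : lmodType R) (f : {linear M -> N}) : lmodType R :=
  kertype f.

Definition surj (A B : Type) (g : A -> B) := forall y, exists x, g x = y.

(* projective object of R-Mod: lifting along every epimorphism (= surjection) *)
Definition mod_projective (R : pzRingType) (P : lmodType R) : Prop :=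
  forall (M N : lmodType R) (g : {linear M -> N}) (f : {linear P -> N}),
    surj g -> exists h : {linear P -> M}, forall x, g (h x) = f x.

Definition mod_subproj (R : pzRingType) (M N : lmodType R) : Prop :=
  forall f : {linear M -> N}, exists (P : lmodType R) (a : {linear M -> P})
    (b : {linear P -> N}), mod_projective P /\ forall x, b (a x) = f x.

Definition PrInv_mod (R : pzRingType) (L : lmodType R -> Prop) (N : lmodType R) :=
  forall C, L C -> mod_subproj C N.

Definition is_zero_mod (R : pzRingType) (M : lmodType R) := forall x : M, x = 0.

Definition ext_closed (R : pzRingType) (L : lmodType R -> Prop) : Prop :=
  forall (A B C : lmodType R) (f : {linear A -> B}) (g : {linear B -> C}),
    injective f -> surj g -> (forall y, g y = 0 <-> exists x, f x = y) ->
    L A -> L C -> L B.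

(* ---------- complexes (homological indexing) ----------
   cdiff X n is the differential d_{n+1} : X_{n+1} -> X_n. *)
Record complex (R : pzRingType) := Complex {
  cobj :> int -> lmodType R;
  cdiff : forall n : int, {linear cobj (n + 1) -> cobj n};
  cdiff_sq : forall (n : int) (x : cobj (n + 1 + 1)), cdiff n (cdiff (n + 1) x) = 0 }.

Record chainmap (R : pzRingType) (X Y : complex R) := ChainMap {
  cmap :> forall n : int, {linear X n -> Y n};
  cmap_comm : forall (n : int) (x : X (n + 1)),
    cmap n (cdiff X n x) = cdiff Y n (cmap (n + 1) x) }.

(* projective object of C(R): lifting along every epimorphism
   (= degreewise surjective chain map) *)
Definition cx_projective (R : pzRingType) (P : complex R) : Prop :=
  forall (Y Z : complex R) (g : chainmap Y Z) (f : chainmap P Z),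
    (forall n, surj (g n)) ->
    exists h : chainmap P Y, forall n x, g n (h n x) = f n x.

Definition cx_subproj (R : pzRingType) (M N : complex R) : Prop :=
  forall f : chainmap M N, exists (P : complex R) (a : chainmap M P)
    (b : chainmap P N), cx_projective P /\ forall n x, b n (a n x) = f n x.

Definition PrInv_cx (R : pzRingType) (C : complex R -> Prop) (N : complex R) :=
  forall M, C M -> cx_subproj M N.

(* f is null-homotopic: f_{n} = d_{n+1} s_n + s_{n-1} d_n (written at degree n+1) *)
Definition null_homotopic (R : pzRingType) (X Y : complex R) (f : chainmap X Y) :=
  exists s : forall n : int, {linear X n -> Y (n + 1)},
    forall (n : int) (x : X (n + 1)),
      f (n + 1) x = cdiff Y (n + 1) (s (n + 1) x) + s n (cdiff X n x).

Definition homK_zero (R : pzRingType) (M N : complex R) :=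
  forall f : chainmap M N, null_homotopic f.

Definition sharp (R : pzRingType) (L : lmodType R -> Prop) (X : complex R) :=
  forall n, L (X n).

Definition cx_exact (R : pzRingType) (X : complex R) :=
  forall (n : int) (y : X (n + 1)), cdiff X n y = 0 ->
    exists x : X (n + 1 + 1), cdiff X (n + 1) x = y.

(* tilde L : exact complexes whose cycle modules Z_{n+1}(X) = Ker d_{n+1} are in L *)
Definition tilde (R : pzRingType) (L : lmodType R -> Prop) (X : complex R) :=
  cx_exact X /\ forall n : int, L (Ker (cdiff X n)).

(* Main.v *)
Require Import Defs.
From HB Require Import structures.
From mathcomp Require Import all_boot all_order all_algebra.
From mathcomp Require Import zify.
From Stdlib Require Import ClassicalEpsilon.
Set Implicit Arguments. Unset Strict Implicit. Unset Printing Implicit Defensive.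
Import GRing.Theory.
Local Open Scope ring_scope.

Definition mkLin (R : pzRingType) (U V : lmodType R) (f : U -> V) (H : linear f) : {linear U -> V} :=
  HB.pack f (GRing.isLinear.Build R U V *:%R f H).
Lemma mkLinE R U V f H x : @mkLin R U V f H x = f x. Proof. by []. Qed.

Definition tr (F : int -> Type) (i j : int) (e : i = j) (x : F i) : F j :=
  match e in _ = j return F j with erefl => x end.
Arguments tr F [i j] e x.

Lemma tr_id (F : int -> Type) i (e : i = i) x : tr F e x = x.
Proof. by rewrite (eq_irrelevance e erefl). Qed.
Lemma tr_trans (F : int -> Type) i j k (e1 : i = j) (e2 : j = k) x :
  tr F e2 (tr F e1 x) = tr F (etrans e1 e2) x.
Proof. by case: k / e2; case: j / e1. Qed.
Lemma tr_nat (F G : int -> Type) (h : forall n, F n -> G n) i j (e : i = j) x :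
  tr G e (h i x) = h j (tr F e x).
Proof. by case: j / e. Qed.
Lemma tr_nat1 (F G : int -> Type) (h : forall n, F n -> G (n + 1)) i j (e : i = j)
  (e' : i + 1 = j + 1) x : tr G e' (h i x) = h j (tr F e x).
Proof. by destruct e; rewrite /= tr_id. Qed.
Lemma tr_comp (F : int -> Type) (s : int -> int) i j (e : i = j) (e' : s i = s j) x :
  tr (fun n => F (s n)) e x = tr F e' x.
Proof. by destruct e; rewrite /= tr_id. Qed.
Lemma tr_const (T : Type) i j (e : i = j) x : tr (fun _ => T) e x = x.
Proof. by case: j / e. Qed.
Lemma tr_pair (F G : int -> Type) i j (e : i = j) x y :
  tr (fun n => (F n * G n)%type) e (x, y) = (tr F e x, tr G e y).
Proof. by case: j / e. Qed.

Section S.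
Variable R : pzRingType.

Lemma tr_lin (F : int -> lmodType R) i j (e : i = j) : linear (tr (fun n => F n) e).
Proof. by case: j / e. Qed.
Lemma trP (F : int -> lmodType R) i j (e : i = j) a x y :
  tr (fun n => F n) e (a *: x + y) = a *: tr (fun n => F n) e x + tr (fun n => F n) e y.
Proof. by case: j / e. Qed.
Lemma trD (F : int -> lmodType R) i j (e : i = j) x y :
  tr (fun n => F n) e (x + y) = tr (fun n => F n) e x + tr (fun n => F n) e y.
Proof. by case: j / e. Qed.
Definition trL (F : int -> lmodType R) i j (e : i = j) : {linear F i -> F j} := mkLin (tr_lin e).
Lemma tr0 (F : int -> lmodType R) i j (e : i = j) : tr (fun n => F n) e 0 = 0.
Proof. by case: j / e. Qed.

Lemma tr_cdiff (X : complex R) i j (e : i = j) (e' : i + 1 = j + 1) x :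
  tr (fun n => X n) e (cdiff X i x) = cdiff X j (tr (fun n => X n) e' x).
Proof. by destruct e; rewrite /= tr_id. Qed.

Lemma ek (k : int) : k + 1 - 1 = k. Proof. by rewrite addrK. Qed.
Lemma e1 (k : int) : k - 1 + 1 = k. Proof. by rewrite subrK. Qed.

Section Pq.
Variable Q : int -> lmodType R.
Definition Pobj (k : int) : lmodType R := (Q (k - 1) * Q k)%type.
Definition Pdf (k : int) (p : Pobj (k + 1)) : Pobj k :=
  (0, tr (fun n => Q n) (ek k) p.1).
Lemma Pd_lin k : linear (@Pdf k).
Proof.
move=> a [x1 x2] [y1 y2]; rewrite /Pdf /=.
have := linearP (trL Q (ek k)) a x1 y1; rewrite ?mkLinE => ->.
by congr (_, _) => /=; rewrite ?scaler0 ?addr0.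
Qed.
Definition Pd k : {linear Pobj (k + 1) -> Pobj k} := mkLin (@Pd_lin k).
Lemma Pd_sq k x : Pd k (Pd (k + 1) x) = 0.
Proof. by rewrite ?mkLinE /Pdf /= tr0. Qed.
Definition Pq : complex R := Complex Pd_sq.

Section FromE.
Variable W : complex R.
Variable b : forall n, {linear Q n -> W (n + 1)}.
Definition fEf k (p : Pobj k) : W k :=
  tr (fun n => W n) (e1 k) (b (k - 1) p.1) + cdiff W k (b k p.2).
Lemma fE_lin k : linear (@fEf k).
Proof.
move=> a [x1 x2] [y1 y2]; rewrite /fEf /=.
rewrite !linearP trP.
by rewrite scalerDr addrACA.
Qed.
Definition fEm k : {linear Pobj k -> W k} := mkLin (@fE_lin k).
Lemma fE_comm k (x : Pobj (k + 1)) : fEm k (Pd k x) = cdiff W k (fEm (k + 1) x).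
Proof.
rewrite ?mkLinE /fEf /Pdf /= !linear0 tr0 add0r linearD /= cdiff_sq addr0.
congr (cdiff W k _).
by rewrite (@tr_nat1 (fun n => Q n) (fun n => W n) (fun n x => b n x) _ _ (ek k) (e1 (k + 1))).
Qed.
Definition fromE : chainmap Pq W := @ChainMap _ Pq W fEm fE_comm.
End FromE.

Section ToE.
Variable M : complex R.
Variable a : forall n, {linear M n -> Q n}.
Definition tEf k (x : M k) : Pobj k :=
  (a (k - 1) (cdiff M (k - 1) (tr (fun n => M n) (esym (e1 k)) x)), a k x).
Lemma tE_lin k : linear (@tEf k).
Proof.
move=> c x y; rewrite /tEf /=.
by congr (_, _) => /=; rewrite ?trP !linearP.
Qed.
Definition tEm k : {linear M k -> Pobj k} := mkLin (@tE_lin k).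
Lemma tE_comm k (x : M (k + 1)) : tEm k (cdiff M k x) = Pd k (tEm (k + 1) x).
Proof.
rewrite ?mkLinE /tEf /Pdf /=; congr (_, _).
  have e' : k + 1 = k - 1 + 1 + 1 by rewrite e1.
  by rewrite (tr_cdiff (esym (e1 k)) e') cdiff_sq linear0.
have e' : k + 1 - 1 + 1 = k + 1 by rewrite ek.
rewrite (@tr_nat (fun n => M n) (fun n => Q n) (fun n x => a n x) _ _ (ek k)).
rewrite (tr_cdiff (ek k) e') tr_trans tr_id //.
Qed.
Definition toE : chainmap M Pq := @ChainMap _ M Pq tEm tE_comm.
End ToE.

Lemma tr_Pobj i j (e : i = j) x y :
  tr (fun n => Pobj n) e (x, y) = (tr (fun n => Q (n - 1)) e x, tr (fun n => Q n) e y).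
Proof. by case: j / e. Qed.

Lemma rho_lin (Z : complex R) (phi : chainmap Pq Z) n :
  linear (fun q : Q n => phi (n + 1) (tr (fun m => Q m) (esym (ek n)) q, 0)).
Proof.
move=> c x y /=; rewrite -linearP; congr (phi (n + 1) _).
by congr (_, _) => /=; rewrite ?trP ?scaler0 ?addr0.
Qed.

Lemma Pq_proj : (forall n, mod_projective (Q n)) -> cx_projective Pq.
Proof.
move=> HQ Y Z g phi gs.
pose rho n := mkLin (@rho_lin Z phi n).
have H n : exists psi : {linear Q n -> Y (n + 1)}, forall q, g (n + 1) (psi q) = rho n q.
  exact: (HQ n _ _ (g (n + 1)) (rho n) (gs (n + 1))).
pose psi n := proj1_sig (constructive_indefinite_description _ (H n)).
have psiP n q : g (n + 1) (psi n q) = rho n q.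
  exact: (proj2_sig (constructive_indefinite_description _ (H n))).
exists (fromE psi) => k [p1 p2].
rewrite /= ?mkLinE /fEf /= linearD.
rewrite -(@tr_nat (fun n => Y n) (fun n => Z n) (fun n x => g n x)).
rewrite cmap_comm psiP psiP ?mkLinE -cmap_comm.
rewrite (@tr_nat (fun n => Pq n) (fun n => Z n) (fun n x => phi n x)).
rewrite /= ?mkLinE /Pdf /= tr_trans tr_id.
change (tr (fun n => Pq n) (e1 k)) with (tr (fun n => Pobj n) (e1 k)).
rewrite tr_Pobj tr0.
have e' : k - 1 + 1 - 1 = k - 1 by rewrite e1.
rewrite (tr_comp (F := fun n => Q n) (s := fun n => n - 1) (e1 k) e') tr_trans tr_id.
rewrite -linearD; congr (phi k _).
by congr (_, _) => /=; rewrite ?addr0 ?add0r.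
Qed.
End Pq.

Lemma fact (M W : complex R) (f : chainmap M W) (s : forall n, {linear M n -> W (n + 1)}) :
  (forall n x, f (n + 1) x = cdiff W (n + 1) (s (n + 1) x) + s n (cdiff M n x)) ->
  (forall n, exists (Q : lmodType R) (a : {linear M n -> Q}) (b : {linear Q -> W (n + 1)}),
      mod_projective Q /\ forall x, b (a x) = s n x) ->
  exists (P : complex R) (a : chainmap M P) (b : chainmap P W),
    cx_projective P /\ forall n x, b n (a n x) = f n x.
Proof.
move=> Hs H.
pose Q n := proj1_sig (constructive_indefinite_description _ (H n)).
have HQ n : exists (a : {linear M n -> Q n}) (b : {linear Q n -> W (n + 1)}),
      mod_projective (Q n) /\ forall x, b (a x) = s n x.
  exact: (proj2_sig (constructive_indefinite_description _ (H n))).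
pose a n := proj1_sig (constructive_indefinite_description _ (HQ n)).
have Ha n : exists (b : {linear Q n -> W (n + 1)}),
      mod_projective (Q n) /\ forall x, b (a n x) = s n x.
  exact: (proj2_sig (constructive_indefinite_description _ (HQ n))).
pose b n := proj1_sig (constructive_indefinite_description _ (Ha n)).
have Hb n : mod_projective (Q n) /\ forall x, b n (a n x) = s n x.
  exact: (proj2_sig (constructive_indefinite_description _ (Ha n))).
exists (Pq Q), (toE a), (fromE b); split.
  by apply: Pq_proj => n; case: (Hb n).
move=> k x; rewrite /= ?mkLinE /fEf /tEf /=.
rewrite (proj2 (Hb _)) (proj2 (Hb _)).
set y := tr (fun n => M n) (esym (e1 k)) x.
have := congr1 (tr (fun n => W n) (e1 k)) (Hs (k - 1) y).
rewrite trD (@tr_nat (fun n => M n) (fun n => W n) (fun n x => f n x)).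
rewrite /y tr_trans tr_id => ->.
have e' : k - 1 + 1 + 1 = k + 1 by rewrite e1.
rewrite (tr_cdiff (e1 k) e').
rewrite (@tr_nat1 (fun n => M n) (fun n => W n) (fun n x => s n x) _ _ (e1 k) e').
by rewrite tr_trans tr_id addrC.
Qed.
End S.

Section S.
Variable R : pzRingType.
Definition Z0 : lmodType R := 'M[R]_(1, 0).
Lemma Z0_0 (x : Z0) : x = 0. Proof. exact: thinmx0. Qed.
Lemma zl_lin (A B : lmodType R) : linear (fun _ : A => 0 : B).
Proof. by move=> a x y; rewrite scaler0 addr0. Qed.
Definition zl (A B : lmodType R) : {linear A -> B} := mkLin (@zl_lin A B).

Lemma iso_closed (L : lmodType R -> Prop) : ext_closed L -> L Z0 ->
  forall (B C : lmodType R) (u : {linear B -> C}), injective u -> surj u -> L C -> L B.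
Proof.
move=> HE L0 B C u ui us LC.
apply: (HE Z0 B C (zl Z0 B) u) => //.
- by move=> x y _; rewrite (Z0_0 x) (Z0_0 y).
- move=> y; split.
    by move=> uy; exists 0; rewrite ?mkLinE; apply: ui; rewrite uy linear0.
  by case=> x <-; rewrite ?mkLinE linear0.
Qed.

Lemma val_lin (A B : lmodType R) (f : {linear A -> B}) : linear (fun x : Ker f => val x).
Proof. by []. Qed.
Definition valL (A B : lmodType R) (f : {linear A -> B}) : {linear Ker f -> A} := mkLin (@val_lin A B f).

Lemma kin (A B : lmodType R) (f : {linear A -> B}) x : f x = 0 -> x \in kerpred f.
Proof. by move=> h; rewrite unfold_in /kerpred h eqxx. Qed.
Lemma kout (A B : lmodType R) (f : {linear A -> B}) (z : Ker f) : f (val z) = 0.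
Proof. by case: z => x /=; rewrite unfold_in /kerpred => /eqP. Qed.

Definition kgf (M : complex R) i (x : M (i + 1 + 1)) : Ker (cdiff M i) :=
  @KerElt _ _ _ (cdiff M i) (cdiff M (i + 1) x) (kin (cdiff_sq x)).
Lemma kg_lin (M : complex R) i : linear (@kgf M i).
Proof. by move=> a x y; apply: val_inj; rewrite /= linearP. Qed.

Lemma tilde_comp (L : lmodType R -> Prop) : ext_closed L ->
  forall M : complex R, tilde L M -> forall n, L (M n).
Proof.
move=> HE M [ex HK].
have H i : L (M (i + 1 + 1)).
  apply: (HE _ _ _ (valL (cdiff M (i + 1))) (mkLin (@kg_lin M i))) => //.
  - by move=> x y; apply: val_inj.
  - move=> z; have [x hx] := ex i (val z) (kout z).
    by exists x; apply: val_inj; rewrite /= hx.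
  - move=> y; rewrite ?mkLinE; split.
      move=> h; have h' : cdiff M (i + 1) y = 0 by move: (congr1 val h).
      by exists (KerElt (kin h')); rewrite ?mkLinE.
    case=> z <-; apply: val_inj; rewrite /= ?mkLinE; exact: kout.
move=> n; have := H (n - 1 - 1); by rewrite !subrK.
Qed.

Lemma factB (L : lmodType R -> Prop) : ext_closed L ->
  forall (M W : complex R) (f : chainmap M W), tilde L M ->
  (forall k, PrInv_mod L (W k)) -> null_homotopic f ->
  exists (P : complex R) (a : chainmap M P) (b : chainmap P W),
    cx_projective P /\ forall n x, b n (a n x) = f n x.
Proof.
move=> HE M W f HM HW [s Hs]; apply: (fact Hs) => n.
have [P [a [b [pP hb]]]] := HW (n + 1) (M n) (tilde_comp HE HM n) (s n).
by exists P, a, b.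
Qed.

Lemma id_lin (A : lmodType R) : linear (fun x : A => x). Proof. by []. Qed.
Definition idL (A : lmodType R) : {linear A -> A} := mkLin (@id_lin A).
Lemma idcm_comm (P : complex R) n (x : P (n + 1)) : idL (P n) (cdiff P n x) = cdiff P n (idL (P (n + 1)) x).
Proof. by []. Qed.
Definition idcm (P : complex R) : chainmap P P := @ChainMap _ P P (fun n => idL (P n)) (@idcm_comm P).

Definition contr (P : complex R) := exists s : forall n, {linear P n -> P (n + 1)},
  forall n x, x = cdiff P (n + 1) (s (n + 1) x) + s n (cdiff P n x).

Lemma nh_through (P : complex R) : contr P -> forall (M N : complex R) (a : chainmap M P)
  (b : chainmap P N) (f : chainmap M N), (forall n x, b n (a n x) = f n x) -> null_homotopic f.
Proof.
move=> [s Hs] M N a b f hf.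
exists (fun n => (b (n + 1) \o s n \o a n : {linear M n -> N (n + 1)})) => n x /=.
by rewrite -hf {1}(Hs _ (a (n + 1) x)) linearD !cmap_comm.
Qed.

Section E.
Variable P : complex R.
Definition Eobj (n : int) : lmodType R := (cobj P n * cobj P (n + 1))%type.
Definition Edf n (p : Eobj (n + 1)) : Eobj n := (cdiff P n p.1, p.1 - cdiff P (n + 1) p.2).
Lemma Ed_lin n : linear (@Edf n).
Proof.
move=> c [x1 x2] [y1 y2]; rewrite /Edf /=.
congr (_, _) => /=; first by rewrite linearP.
by rewrite (linearP (cdiff P (n + 1))) opprD scalerBr addrACA.
Qed.
Definition Ed n : {linear Eobj (n + 1) -> Eobj n} := mkLin (@Ed_lin n).
Lemma Ed_sq n x : Ed n (Ed (n + 1) x) = 0.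
Proof.
rewrite ?mkLinE /Edf /=; congr (_, _) => /=; first by rewrite cdiff_sq.
by rewrite linearB cdiff_sq subr0 subrr.
Qed.
Definition Ecx : complex R := Complex Ed_sq.
Lemma fst_lin n : linear (fun p : Eobj n => p.1). Proof. by []. Qed.
Lemma pi_comm n (x : Ecx (n + 1)) : mkLin (@fst_lin n) (cdiff Ecx n x) = cdiff P n (mkLin (@fst_lin (n + 1)) x).
Proof. by []. Qed.
Definition piE : chainmap Ecx P := @ChainMap _ Ecx P (fun n => mkLin (@fst_lin n)) pi_comm.
End E.

Lemma snd_lin (A B : lmodType R) : linear (fun p : (A * B)%type => p.2). Proof. by []. Qed.

Lemma proj_contr (P : complex R) : cx_projective P -> contr P.
Proof.
move=> pP.
have [h hh] := pP _ _ (piE P) (idcm P) (fun n x => ex_intro _ (x, 0) erefl).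
exists (fun n => (mkLin (@snd_lin (P n) (P (n + 1))) \o h n : {linear P n -> P (n + 1)})) => n x /=.
have := @cmap_comm _ _ _ h n x.
have h1 := hh n (cdiff P n x); have h2 := hh (n + 1) x.
rewrite /= in h1 h2.
case: (h n (cdiff P n x)) h1 => a1 b1 /= -> .
case: (h (n + 1) x) h2 => a2 b2 /= -> .
rewrite /Edf => /(congr1 snd) /= ->.
by rewrite [_ + (_ - _)]addrC subrK.
Qed.

Definition selk (A : int -> lmodType R) (B : lmodType R) (k : int) (f : {linear A k -> B}) n (x : A n) : B :=
  if (n =P k) is ReflectT e then f (tr (fun m => A m) e x) else 0.
Lemma selk_lin A B k f n : linear (@selk A B k f n).
Proof.
move=> c x y; rewrite /selk; case: (n =P k) => [e|_]; last by rewrite scaler0 addr0.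
by rewrite trP linearP.
Qed.
Lemma selkE A B k f x : @selk A B k f k x = f x.
Proof. by rewrite /selk; case: (k =P k) => [e|//]; rewrite tr_id. Qed.

Definition selk' (B : int -> lmodType R) (A : lmodType R) (k : int) (f : {linear A -> B k}) n (x : A) : B n :=
  if (k =P n) is ReflectT e then tr (fun m => B m) e (f x) else 0.
Lemma selk'_lin B A k f n : linear (@selk' B A k f n).
Proof.
move=> c x y; rewrite /selk'; case: (k =P n) => [e|_]; last by rewrite scaler0 addr0.
by rewrite linearP trP.
Qed.
Lemma selk'E B A k f x : @selk' B A k f k x = f x.
Proof. by rewrite /selk'; case: (k =P k) => [e|//]; rewrite tr_id. Qed.

Lemma selk'0 B A k f n : @selk' B A k f n 0 = 0.
Proof. by rewrite /selk'; case: (k =P n) => [e|//]; rewrite linear0 tr0. Qed.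

Lemma pair_lin (A B : lmodType R) (u : {linear A -> B}) : linear (fun p : (A * A)%type => (u p.1, u p.2)).
Proof. by move=> c [x1 x2] [y1 y2]; congr (_, _) => /=; rewrite linearP. Qed.

Lemma comp_proj (P : complex R) : cx_projective P -> forall k, mod_projective (P k).
Proof.
move=> pP k Y Z u phi us.
pose TY := Pq (fun _ => Y); pose TZ := Pq (fun _ => Z).
pose Uf n : {linear TY n -> TZ n} := mkLin (@pair_lin Y Z u).
have Uc n (x : TY (n + 1)) : Uf n (cdiff TY n x) = cdiff TZ n (Uf (n + 1) x).
  rewrite /= ?mkLinE /Pdf /=; congr (_, _) => /=; first by rewrite linear0.
  by rewrite !tr_const.
pose U : chainmap TY TZ := @ChainMap _ TY TZ Uf Uc.
pose gam n : {linear P n -> (fun _ => Z) n} := mkLin (@selk_lin (fun m => P m) Z k phi n).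
have Us n : surj (U n).
  move=> [z1 z2]; have [y1 <-] := us z1; have [y2 <-] := us z2.
  by exists (y1, y2).
have [h hh] := pP _ _ U (toE gam) Us.
exists (mkLin (@snd_lin Y Y) \o h k : {linear P k -> Y}) => x /=.
have := hh k x; rewrite /= ?mkLinE /tEf /= => /(congr1 snd) /= ->.
by rewrite selkE.
Qed.

Lemma lemA (L : lmodType R -> Prop) : ext_closed L -> L Z0 ->
  forall W : complex R, PrInv_cx (tilde L) W -> forall k, PrInv_mod L (W k).
Proof.
move=> HE L0 W HW k C LC g.
pose T := Pq (fun _ => C).
have TL : tilde L T.
  split.
    move=> n [y1 y2]; rewrite /= ?mkLinE /Pdf /= tr_const => /(congr1 snd) /= y10.
    by exists (y2, 0); rewrite /= ?mkLinE /Pdf /= tr_const y10.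
  move=> n.
  have sl : linear (fun z : Ker (cdiff T n) => (val z).2) by [].
  apply: (iso_closed HE L0 (u := mkLin sl)) => //.
  - move=> [[a1 a2] ha] [[b1 b2] hb]; rewrite ?mkLinE /= => e; apply: val_inj => /=.
    move: ha hb; rewrite !unfold_in /kerpred /= ?mkLinE /Pdf /= !tr_const.
    by move=> /eqP /(congr1 snd) /= -> /eqP /(congr1 snd) /= ->; rewrite e.
  - move=> c.
    have hc : cdiff T n ((0, c) : T (n + 1)) = 0.
      by rewrite /= ?mkLinE /Pdf /= tr_const.
    by exists (KerElt (kin hc)).
pose bet n : {linear C -> W (n + 1)} :=
  mkLin (@selk'_lin (fun m => W (m + 1)) C (k - 1) (trL (fun m => W m) (esym (e1 k)) \o g) n).
have [P [a [b [pP hb]]]] := HW T TL (fromE bet).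
have al : linear (fun c : C => a k ((c, 0) : T k)).
  move=> c x y /=; rewrite -linearP; congr (a k _).
  by congr (_, _) => /=; rewrite scaler0 addr0.
exists (P k), (mkLin al), (b k); split; first exact: comp_proj.
move=> c; rewrite mkLinE hb /= ?mkLinE /fEf /= selk'E /=.
by rewrite selk'0 linear0 addr0 tr_trans tr_id.
Qed.
End S.

Section S.
Variable R : pzRingType.
Variable N : lmodType R.
Definition bD (k : int) := (k == 0) || (k == -1).
Definition Dobj (k : int) : lmodType R := if bD k then N else Z0 R.
Definition inj (b : bool) (a : N) : (if b then N else Z0 R) :=
  match b as c return (if c then N else Z0 R) with true => a | false => 0 end.
Definition prj (b : bool) : (if b then N else Z0 R) -> N :=
  match b as c return ((if c then N else Z0 R) -> N) with true => fun a => a | false => fun _ => 0 end.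
Arguments inj : clear implicits.
Arguments prj : clear implicits.
Definition co i j (x : Dobj i) : Dobj j := inj (bD j) (prj (bD i) x).
Lemma co_lin i j : linear (@co i j).
Proof.
move=> a; rewrite /co /Dobj; case: (bD i) => x y /=; case: (bD j) => //=; 
  by rewrite ?scaler0 ?addr0.
Qed.
Definition coL i j : {linear Dobj i -> Dobj j} := mkLin (@co_lin i j).
Definition Ddf k (x : Dobj (k + 1)) : Dobj k := if k == -1 then coL (k + 1) k x else 0.
Lemma Dd_lin k : linear (@Ddf k).
Proof. by move=> a x y; rewrite /Ddf; case: (k == -1); rewrite ?linearP ?scaler0 ?addr0. Qed.
Definition Dd k : {linear Dobj (k + 1) -> Dobj k} := mkLin (@Dd_lin k).
Definition Dsf k (x : Dobj k) : Dobj (k + 1) := if k == -1 then coL k (k + 1) x else 0.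
Lemma Ds_lin k : linear (@Dsf k).
Proof. by move=> a x y; rewrite /Dsf; case: (k == -1); rewrite ?linearP ?scaler0 ?addr0. Qed.
Definition Ds k : {linear Dobj k -> Dobj (k + 1)} := mkLin (@Ds_lin k).
Lemma Dd_sq k x : Dd k (Dd (k + 1) x) = 0.
Proof.
rewrite ?mkLinE /Ddf; case: ifP => hk; last by [].
have -> : (k + 1 == -1) = false by apply/eqP; move/eqP: hk; lia.
by rewrite linear0.
Qed.
Definition Dcx : complex R := Complex Dd_sq.

Lemma Dobj0 k : ~~ bD k -> forall x : Dobj k, x = 0.
Proof. rewrite /Dobj; case: (bD k) => // _ x; exact: Z0_0. Qed.

Lemma Dcontr : contr Dcx.
Proof.
exists Ds => n x.
case: (eqVneq n (-2)) => [e|n2].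
  by subst n; rewrite /= ?mkLinE /Ddf /Dsf /= addr0.
case: (eqVneq n (-1)) => [e|n1].
  by subst n; rewrite /= ?mkLinE /Ddf /Dsf /= add0r.
have hb : ~~ bD (n + 1).
  by rewrite /bD; apply/norP; split; apply/eqP; move/eqP: n2; move/eqP: n1; lia.
by rewrite (Dobj0 hb x) !linear0 addr0.
Qed.

Lemma Dcases (P : lmodType R -> Prop) : P N -> P (Z0 R) -> forall k, P (Dcx k).
Proof. by move=> h1 h2 k; rewrite /= /Dobj; case: (bD k). Qed.
End S.

Lemma Z0_proj (R : pzRingType) : mod_projective (Z0 R).
Proof.
move=> M N' g h _; exists (zl _ _) => x.
by rewrite mkLinE linear0 (Z0_0 x) linear0.
Qed.

Lemma Z0_PrInv (R : pzRingType) (L : lmodType R -> Prop) : PrInv_mod L (Z0 R).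
Proof.
move=> C _ f; exists (Z0 R), f, (idL _); split; first exact: Z0_proj.
by [].
Qed.

Unset Implicit Arguments.
Theorem theorem3p1 (R : pzRingType) (L G : lmodType R -> Prop) :
  ext_closed L ->
  (forall Z : lmodType R, is_zero_mod Z -> L Z /\ G Z) ->
  ((forall N, PrInv_mod L N <-> G N) /\
     (forall M N : complex R, sharp G N -> tilde L M -> homK_zero M N))
  <-> (forall N : complex R, PrInv_cx (tilde L) N <-> sharp G N).
Proof.
move=> HE HZ.
have z0 : is_zero_mod (Z0 R) := @Z0_0 R.
have [L0 G0] := HZ _ z0.
split.
- case=> H1 H2 N; split.
  + move=> HP k; apply/H1. exact: (@lemA _ _ HE L0 _ HP k).
  + move=> HG M HM f; apply: (factB HE HM) => [k|]; [by apply/H1 | exact: H2].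
- move=> H; split.
  + move=> N; split.
    * move=> HPN.
      have HS : sharp G (Dcx N).
        apply/H => M HM f; apply: (factB HE HM); first exact: (Dcases HPN (@Z0_PrInv R L)).
        by apply: (nh_through (Dcontr N) (a:=f) (b:=idcm (Dcx N))).
      exact: (HS 0).
    * move=> HGN.
      have HP : PrInv_cx (tilde L) (Dcx N) by apply/H; exact: (Dcases HGN G0).
      exact: (@lemA _ _ HE L0 _ HP 0).
  + move=> M N HG HM f.
    have [P [a [b [pP hb]]]] := (proj2 (H N) HG) M HM f.
    exact: (nh_through (proj_contr pP) (a:=a) (b:=b) hb).
Qed.
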